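(* Let $G$ be a finitely generated group and $H\le K\le G$ subgroups such that $H\backslash G$ is narrow. Then either $[G:K]<\infty$ or $[K:H]<\infty$.
   Context: $H\backslash G$ is narrow if the Schreier coset graph $H\backslash\mathrm{Cay}(G,S)$ (quotient of the Cayley graph by the left $H$-action, edges of length 1) is narrow for some (equivalently any) finite generating set $S$. An unbounded connected graph $Y$ is narrow if for each $\mu\ge1$ there is $L(\mu)$ such that any $L(\mu)+1$ unbounded $\mu$-coarsely connected vertex subsets of $Y$ include two that intersect (a vertex subset $Z$ is $\mu$-coarsely connected if any two points of $Z$ are joined by a chain in $Z$ with consecutive distances at most $\mu$). *)

(* Defs.v *)
From Stdlib Require Import List Arith.
Import ListNotations.

Record Group : Type := {
  carrier :> Type;
  gmul : carrier -> carrier -> carrier;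
  ginv : carrier -> carrier;
  gone : carrier;
  gmul_assoc : forall x y z, gmul x (gmul y z) = gmul (gmul x y) z;
  gmul_one_l : forall x, gmul gone x = x;
  gmul_one_r : forall x, gmul x gone = x;
  gmul_inv_l : forall x, gmul (ginv x) x = gone;
  gmul_inv_r : forall x, gmul x (ginv x) = gone
}.

Section Defs.
Variable G : Group.

Definition is_subgroup (H : G -> Prop) : Prop :=
  H (gone G) /\
  (forall x y, H x -> H y -> H (gmul G x y)) /\
  (forall x, H x -> H (ginv G x)).

Inductive generated (S : list G) : G -> Prop :=
| gen_one : generated S (gone G)
| gen_mul : forall x s, generated S x -> In s S -> generated S (gmul G x s)
| gen_mul_inv : forall x s, generated S x -> In s S ->
    generated S (gmul G x (ginv G s)).

Definition generates (S : list G) : Prop := forall g, generated S g.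

Definition finitely_generated : Prop := exists S : list G, generates S.

(* [G : K] < oo : finitely many right cosets K r cover G *)
Definition finite_index (K : G -> Prop) : Prop :=
  exists l : list G, forall g, exists r, In r l /\ K (gmul G g (ginv G r)).

(* [K : H] < oo : finitely many right cosets H r (r in K) cover K *)
Definition finite_index_in (K H : G -> Prop) : Prop :=
  exists l : list G, (forall r, In r l -> K r) /\
    forall k, K k -> exists r, In r l /\ H (gmul G k (ginv G r)).

(* Schreier coset graph H\Cay(G,S); the vertex Hx is represented by any x.  *)
Definition same_coset (H : G -> Prop) (x y : G) : Prop :=
  H (gmul G x (ginv G y)).

Definition coset_adj (H : G -> Prop) (S : list G) (x y : G) : Prop :=
  exists s, In s S /\
    (same_coset H y (gmul G x s) \/ same_coset H y (gmul G x (ginv G s))).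

Inductive coset_walk (H : G -> Prop) (S : list G) : G -> G -> nat -> Prop :=
| walk_nil : forall x y, same_coset H x y -> coset_walk H S x y 0
| walk_cons : forall x y z n, coset_walk H S x y n -> coset_adj H S y z ->
    coset_walk H S x z (Datatypes.S n).

Definition coset_dist_le (H : G -> Prop) (S : list G) (x y : G) (n : nat) : Prop :=
  exists m, m <= n /\ coset_walk H S x y m.

(* Z is a vertex subset of H\G: a predicate on G saturated under cosets *)
Definition vertex_subset (H : G -> Prop) (Z : G -> Prop) : Prop :=
  forall x y, Z x -> same_coset H x y -> Z y.

Definition unbounded (H : G -> Prop) (S : list G) (Z : G -> Prop) : Prop :=
  forall R : nat, exists x y, Z x /\ Z y /\ ~ coset_dist_le H S x y R.

Inductive coarse_chain (H : G -> Prop) (S : list G) (Z : G -> Prop) (mu : nat)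
  : G -> G -> Prop :=
| chain_nil : forall x, Z x -> coarse_chain H S Z mu x x
| chain_cons : forall x y z, coarse_chain H S Z mu x y -> Z z ->
    coset_dist_le H S y z mu -> coarse_chain H S Z mu x z.

Definition coarsely_connected (H : G -> Prop) (S : list G) (mu : nat)
  (Z : G -> Prop) : Prop :=
  forall x y, Z x -> Z y -> coarse_chain H S Z mu x y.

Definition narrow_graph (H : G -> Prop) (S : list G) : Prop :=
  unbounded H S (fun _ => True) /\
  forall mu : nat, 1 <= mu -> exists L : nat,
    forall Zs : nat -> (G -> Prop),
      (forall i, i <= L -> vertex_subset H (Zs i) /\ unbounded H S (Zs i) /\
                           coarsely_connected H S mu (Zs i)) ->
      exists i j, i <= L /\ j <= L /\ i <> j /\
        exists x, Zs i x /\ Zs j x.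

Definition narrow_coset_space (H : G -> Prop) : Prop :=
  exists S : list G, generates S /\ narrow_graph H S.

End Defs.

(* Main.v *)
Require Import Defs.
From Stdlib Require Import List Arith Lia Classical.
Import ListNotations.

Lemma inv_mul (G : Group) (x y : G) :
  ginv G (gmul G x y) = gmul G (ginv G y) (ginv G x).
Proof.
  set (t := gmul G (ginv G y) (ginv G x)).
  assert (E : gmul G (gmul G x y) t = gone G).
  { unfold t. rewrite <- gmul_assoc, (gmul_assoc G y), gmul_inv_r, gmul_one_l, gmul_inv_r. reflexivity. }
  rewrite <- (gmul_one_r G (ginv G (gmul G x y))), <- E, gmul_assoc, gmul_inv_l, gmul_one_l.
  reflexivity.
Qed.

Lemma inv_inv (G : Group) (x : G) : ginv G (ginv G x) = x.
Proof.
  rewrite <- (gmul_one_r G (ginv G (ginv G x))), <- (gmul_inv_l G x), gmul_assoc,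
    gmul_inv_l, gmul_one_l. reflexivity.
Qed.


Lemma sc_refl (G : Group) (P : G -> Prop) x : is_subgroup G P -> same_coset G P x x.
Proof. intros [h1 _]. unfold same_coset. rewrite gmul_inv_r. exact h1. Qed.

Lemma sc_sym (G : Group) (P : G -> Prop) x y : is_subgroup G P ->
  same_coset G P x y -> same_coset G P y x.
Proof. intros [_ [_ h3]] h. unfold same_coset in *. apply h3 in h.
  rewrite inv_mul, inv_inv in h. exact h. Qed.

Lemma sc_trans (G : Group) (P : G -> Prop) x y z : is_subgroup G P ->
  same_coset G P x y -> same_coset G P y z -> same_coset G P x z.
Proof. intros [_ [h2 _]] a b. unfold same_coset in *.
  pose proof (h2 _ _ a b) as c.
  rewrite <- gmul_assoc, (gmul_assoc G (ginv G y)), gmul_inv_l, gmul_one_l in c. exact c. Qed.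

Lemma sc_rmul (G : Group) (P : G -> Prop) x y g :
  same_coset G P x y -> same_coset G P (gmul G x g) (gmul G y g).
Proof. unfold same_coset. rewrite inv_mul, <- gmul_assoc, (gmul_assoc G g), gmul_inv_r, gmul_one_l. auto. Qed.

Lemma sc_lmul (G : Group) (P : G -> Prop) k x : P k -> same_coset G P (gmul G k x) x.
Proof. unfold same_coset. rewrite <- gmul_assoc, gmul_inv_r, gmul_one_r. auto. Qed.

Lemma sc_sub (G : Group) (P Q : G -> Prop) x y : (forall z, P z -> Q z) ->
  same_coset G P x y -> same_coset G Q x y.
Proof. unfold same_coset; auto. Qed.

Definition letter (G : Group) (S : list G) (r : nat) : G :=
  if r <? length S then nth r S (gone G) else ginv G (nth (r - length S) S (gone G)).

Fixpoint evf (G : Group) (S : list G) (f n : nat) : G :=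
  match f with
  | 0 => gone G
  | Datatypes.S f' => match n with
         | 0 => gone G
         | Datatypes.S m => gmul G (evf G S f' (m / (2 * length S))) (letter G S (m mod (2 * length S)))
         end
  end.

Definition ev (G : Group) (S : list G) n := evf G S n n.

Lemma div_le_self m a : m / a <= m.
Proof. destruct a as [|a]. simpl. lia. apply Nat.Div0.div_le_upper_bound. nia. Qed.

Lemma evf_stable G S : forall f1 f2 n, n <= f1 -> n <= f2 -> evf G S f1 n = evf G S f2 n.
Proof.
  induction f1 as [|f1 IH]; intros f2 n h1 h2.
  - assert (n = 0) by lia. subst. destruct f2; reflexivity.
  - destruct f2 as [|f2]. { assert (n = 0) by lia. subst. reflexivity. }
    destruct n as [|m]. reflexivity. cbn [evf]. f_equal. apply IH;
    pose proof (div_le_self m (2 * length S)); lia.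
Qed.

Lemma ev_S G S m : ev G S (Datatypes.S m) =
  gmul G (ev G S (m / (2 * length S))) (letter G S (m mod (2 * length S))).
Proof.
  unfold ev at 1. cbn [evf]. f_equal. unfold ev. apply evf_stable;
  pose proof (div_le_self m (2 * length S)); lia.
Qed.

Lemma ev_0 G S : ev G S 0 = gone G.
Proof. reflexivity. Qed.

Lemma letter_cases G S r : r < 2 * length S ->
  exists s, In s S /\ (letter G S r = s \/ letter G S r = ginv G s).
Proof.
  intro h. unfold letter. destruct (r <? length S) eqn:E.
  - apply Nat.ltb_lt in E. exists (nth r S (gone G)). split. apply nth_In; auto. auto.
  - apply Nat.ltb_ge in E. exists (nth (r - length S) S (gone G)). split. apply nth_In; lia. auto.
Qed.

Lemma divmod_eq n a r : r < a -> (n * a + r) / a = n /\ (n * a + r) mod a = r.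
Proof. intro h. split.
  - symmetry. apply (Nat.div_unique _ _ _ r); lia.
  - symmetry. apply (Nat.mod_unique _ _ n); lia. Qed.

Lemma ev_surj G S g : generated G S g -> exists n, ev G S n = g.
Proof.
  induction 1 as [|x s _ [n IH] hs|x s _ [n IH] hs].
  - exists 0. reflexivity.
  - destruct (In_nth _ _ (gone G) hs) as [r [hr e]].
    exists (Datatypes.S (n * (2 * length S) + r)). rewrite ev_S.
    destruct (divmod_eq n (2 * length S) r) as [e1 e2]. lia.
    rewrite e1, e2, IH. unfold letter. replace (r <? length S) with true.
    now rewrite e. symmetry; apply Nat.ltb_lt; auto.
  - destruct (In_nth _ _ (gone G) hs) as [r [hr e]].
    exists (Datatypes.S (n * (2 * length S) + (length S + r))). rewrite ev_S.
    destruct (divmod_eq n (2 * length S) (length S + r)) as [e1 e2]. lia.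
    rewrite e1, e2, IH. unfold letter. replace (length S + r <? length S) with false.
    replace (length S + r - length S) with r by lia. now rewrite e.
    symmetry; apply Nat.ltb_ge; lia.
Qed.

Definition Min (G : Group) (S : list G) (K : G -> Prop) (n : nat) :=
  forall m, m < n -> ~ same_coset G K (ev G S m) (ev G S n).

Lemma Min_parent G S K m : S <> [] -> is_subgroup G K -> Min G S K (Datatypes.S m) ->
  Min G S K (m / (2 * length S)).
Proof.
  intros hS hK hm j hj hsc.
  assert (hA : 2 * length S <> 0). { destruct S. congruence. simpl. lia. }
  set (A := 2 * length S) in *.
  set (q := m / A) in *. set (r := m mod A).
  assert (hr : r < A) by (apply Nat.mod_upper_bound; auto).
  assert (em : m = A * q + r) by apply Nat.div_mod_eq.
  apply (hm (Datatypes.S (j * A + r))). nia.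
  rewrite !ev_S. fold A. destruct (divmod_eq j A r hr) as [e1 e2]. rewrite e1, e2.
  fold q. fold r. apply sc_rmul. exact hsc.
Qed.

Fixpoint W (G : Group) (S : list G) (r : nat) : list G :=
  match r with
  | 0 => [gone G]
  | Datatypes.S r' => W G S r' ++ flat_map (fun x => map (fun s => gmul G x s) S ++
                                  map (fun s => gmul G x (ginv G s)) S) (W G S r')
  end.

Lemma W_mono G S n R w : n <= R -> In w (W G S n) -> In w (W G S R).
Proof.
  induction R; intros h hw.
  - assert (n = 0) by lia. subst. exact hw.
  - destruct (Nat.eq_dec n (Datatypes.S R)). subst; exact hw.
    simpl. apply in_or_app. left. apply IHR; auto. lia.
Qed.

Lemma walk_W G H S x z n : is_subgroup G H -> coset_walk G H S x z n ->
  exists w, In w (W G S n) /\ same_coset G H z (gmul G x w).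
Proof.
  intros hH hw. induction hw as [x y e|x y z n hw IH hadj].
  - exists (gone G). split. simpl; auto. rewrite gmul_one_r. apply sc_sym; auto.
  - destruct IH as [w [hw1 hw2]]. destruct hadj as [s [hs [e|e]]].
    + exists (gmul G w s). split.
      * simpl. apply in_or_app. right. apply in_flat_map. exists w. split; auto.
        apply in_or_app. left. apply in_map_iff. eauto.
      * rewrite gmul_assoc. eapply sc_trans; eauto. apply sc_rmul; auto.
    + exists (gmul G w (ginv G s)). split.
      * simpl. apply in_or_app. right. apply in_flat_map. exists w. split; auto.
        apply in_or_app. right. apply in_map_iff. eauto.
      * rewrite gmul_assoc. eapply sc_trans; eauto. apply sc_rmul; auto.
Qed.

Lemma dist_W G H S x z R : is_subgroup G H -> coset_dist_le G H S x z R ->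
  exists w, In w (W G S R) /\ same_coset G H z (gmul G x w).
Proof.
  intros hH [m [hm hw]]. destruct (walk_W _ _ _ _ _ _ hH hw) as [w [h1 h2]].
  exists w. split; auto. eapply W_mono; eauto.
Qed.

Lemma chain_app G H S Z mu x y z : coarse_chain G H S Z mu x y ->
  coarse_chain G H S Z mu y z -> coarse_chain G H S Z mu x z.
Proof.
  intros h1 h2. revert h1. induction h2 as [y hy|y u z h2 IH hz hd]; intro h1; auto.
  eapply chain_cons. apply IH; exact h1. exact hz. exact hd.
Qed.

Lemma adj_dist1 G H S x y : is_subgroup G H -> coset_adj G H S x y -> coset_dist_le G H S x y 1.
Proof. intros hH ha. exists 1. split. lia. eapply walk_cons. apply walk_nil. apply sc_refl; auto. exact ha. Qed.

Lemma adj_down G H S x r : is_subgroup G H -> r < 2 * length S ->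
  coset_adj G H S x (gmul G x (letter G S r)).
Proof.
  intros hH hr. destruct (letter_cases G S r hr) as [s [hs [e|e]]]; rewrite e; exists s; split; auto.
  left. apply sc_refl; auto. right. apply sc_refl; auto.
Qed.

Lemma adj_up G H S x r : is_subgroup G H -> r < 2 * length S ->
  coset_adj G H S (gmul G x (letter G S r)) x.
Proof.
  intros hH hr. destruct (letter_cases G S r hr) as [s [hs [e|e]]]; rewrite e; exists s; split; auto.
  - right. rewrite <- gmul_assoc, gmul_inv_r, gmul_one_r. apply sc_refl; auto.
  - left. rewrite <- gmul_assoc, gmul_inv_l, gmul_one_r. apply sc_refl; auto.
Qed.

Definition Zset (G : Group) (S : list G) (H K : G -> Prop) (k : G) : G -> Prop :=
  fun z => exists n, Min G S K n /\ same_coset G H z (gmul G k (ev G S n)).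

Lemma A_pos (G : Group) (S : list G) : S <> [] -> 2 * length S <> 0.
Proof. destruct S. congruence. simpl. lia. Qed.

Lemma Z_pt G S H K k n : is_subgroup G H -> Min G S K n -> Zset G S H K k (gmul G k (ev G S n)).
Proof. intros hH hm. exists n. split; auto. apply sc_refl; auto. Qed.

Lemma Min0 G S K : Min G S K 0.
Proof. intros m hm. lia. Qed.

Lemma Z_down G S H K k : S <> [] -> is_subgroup G H -> is_subgroup G K ->
  forall n, Min G S K n -> coarse_chain G H S (Zset G S H K k) 1 (gmul G k (ev G S 0)) (gmul G k (ev G S n)).
Proof.
  intros hS hH hK n. induction n as [n IH] using lt_wf_ind. intro hm.
  destruct n as [|m].
  - apply chain_nil. apply Z_pt; auto.
  - pose proof (Min_parent G S K m hS hK hm) as hp.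
    pose proof (div_le_self m (2 * length S)).
    eapply chain_cons. apply (IH (m / (2 * length S))). lia. exact hp.
    apply Z_pt; auto.
    apply adj_dist1; auto. rewrite ev_S, gmul_assoc. apply adj_down; auto.
    apply Nat.mod_upper_bound. apply A_pos; auto.
Qed.

Lemma Z_up G S H K k : S <> [] -> is_subgroup G H -> is_subgroup G K ->
  forall n, Min G S K n -> coarse_chain G H S (Zset G S H K k) 1 (gmul G k (ev G S n)) (gmul G k (ev G S 0)).
Proof.
  intros hS hH hK n. induction n as [n IH] using lt_wf_ind. intro hm.
  destruct n as [|m].
  - apply chain_nil. apply Z_pt; auto.
  - pose proof (Min_parent G S K m hS hK hm) as hp.
    pose proof (div_le_self m (2 * length S)).
    eapply chain_app. 2: { apply (IH (m / (2 * length S))). lia. exact hp. }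
    eapply chain_cons. apply chain_nil. apply Z_pt; auto.
    apply Z_pt; auto.
    apply adj_dist1; auto. rewrite ev_S, gmul_assoc. apply adj_up; auto.
    apply Nat.mod_upper_bound. apply A_pos; auto.
Qed.

Lemma Z_conn G S H K k : S <> [] -> is_subgroup G H -> is_subgroup G K ->
  coarsely_connected G H S 1 (Zset G S H K k).
Proof.
  intros hS hH hK x y [n [hn ex]] [m [hm ey]].
  eapply chain_app. 
  - eapply chain_app. 2: apply (Z_up G S H K k hS hH hK n hn).
    eapply chain_cons. apply chain_nil. exists n; auto. apply Z_pt; auto.
    exists 0. split. lia. apply walk_nil. exact ex.
  - eapply chain_app. apply (Z_down G S H K k hS hH hK m hm).
    eapply chain_cons. apply chain_nil. apply Z_pt; auto. exists m; auto.
    exists 0. split. lia. apply walk_nil. apply sc_sym; auto.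
Qed.

Lemma Z_vertex G S H K k : is_subgroup G H -> vertex_subset G H (Zset G S H K k).
Proof.
  intros hH x y [n [hn ex]] e. exists n. split; auto.
  eapply sc_trans; eauto. apply sc_sym; auto.
Qed.

Lemma least_ex (P : nat -> Prop) : (exists n, P n) -> exists n, P n /\ forall m, m < n -> ~ P m.
Proof.
  intros [n hn]. revert hn. induction n as [n IH] using lt_wf_ind. intro hn.
  destruct (classic (exists m, m < n /\ P m)) as [[m [h1 h2]]|h].
  - apply (IH m h1 h2).
  - exists n. split; auto. intros m hm pm. apply h. eauto.
Qed.

Lemma Z_unb G S H K k : S <> [] -> is_subgroup G H -> is_subgroup G K ->
  (forall x, H x -> K x) -> K k -> generates G S -> ~ finite_index G K ->
  unbounded G H S (Zset G S H K k).
Proof.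
  intros hS hH hK hHK hk gen nfi R.
  apply NNPP. intro hn. apply nfi. exists (W G S R). intro g.
  destruct (ev_surj G S g (gen g)) as [n0 e0].
  destruct (least_ex (fun n => same_coset G K (ev G S n) g)) as [n [hn1 hn2]].
  { exists n0. rewrite e0. apply sc_refl; auto. }
  assert (hmin : Min G S K n).
  { intros m hm c. apply (hn2 m hm). eapply sc_trans; eauto. }
  assert (hd : coset_dist_le G H S (gmul G k (ev G S 0)) (gmul G k (ev G S n)) R).
  { apply NNPP. intro c. apply hn. exists (gmul G k (ev G S 0)), (gmul G k (ev G S n)).
    split. apply Z_pt; auto; apply Min0. split. apply Z_pt; auto. exact c. }
  destruct (dist_W G H S _ _ R hH hd) as [w [hw ew]].
  exists w. split; auto.
  apply (sc_sub G H K) in ew; auto.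
  rewrite ev_0 in ew.
  change (same_coset G K g w).
  apply sc_trans with (ev G S n); auto. apply sc_sym; auto.
  apply sc_trans with (gmul G k (ev G S n)); auto. apply sc_sym; auto. apply sc_lmul; auto.
  apply sc_trans with (gmul G (gmul G k (gone G)) w); auto. apply sc_lmul. rewrite gmul_one_r; auto.
Qed.

Lemma Z_disj G S H K k1 k2 x : is_subgroup G H -> is_subgroup G K ->
  (forall x, H x -> K x) -> K k1 -> K k2 ->
  Zset G S H K k1 x -> Zset G S H K k2 x -> same_coset G H k1 k2.
Proof.
  intros hH hK hHK h1 h2 [n [hn e1]] [m [hm e2]].
  assert (e : same_coset G H (gmul G k1 (ev G S n)) (gmul G k2 (ev G S m))).
  { eapply sc_trans; eauto. apply sc_sym; auto. }
  assert (ek : same_coset G K (ev G S n) (ev G S m)).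
  { apply sc_trans with (gmul G k1 (ev G S n)); auto. apply sc_sym; auto. apply sc_lmul; auto.
    apply sc_trans with (gmul G k2 (ev G S m)); auto. apply (sc_sub G H K); auto. apply sc_lmul; auto. }
  assert (n = m).
  { destruct (lt_eq_lt_dec n m) as [[c|c]|c]; auto.
    - exfalso. apply (hm n c ek).
    - exfalso. apply (hn m c). apply sc_sym; auto. }
  subst m. unfold same_coset in *. rewrite inv_mul, <- gmul_assoc, (gmul_assoc G (ev G S n)),
    gmul_inv_r, gmul_one_l in e. exact e.
Qed.

Lemma klist (G : Group) (H K : G -> Prop) : is_subgroup G H -> ~ finite_index_in G K H ->
  forall N, exists l : list G, length l = N /\ (forall r, In r l -> K r) /\
    forall i j, i < N -> j < N -> i <> j -> ~ same_coset G H (nth i l (gone G)) (nth j l (gone G)).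
Proof.
  intros hH nf N. induction N as [|N [l [hl [hK hd]]]].
  - exists []. repeat split; auto. intros r []. intros; lia.
  - assert (exists k, K k /\ forall r, In r l -> ~ same_coset G H k r) as [k [hk hkr]].
    { apply NNPP. intro c. apply nf. exists l. split; auto. intros k hk.
      apply NNPP. intro c2. apply c. exists k. split; auto. intros r hr e. apply c2. eauto. }
    exists (k :: l). split. simpl; lia. split.
    + intros r [<-|hr]; auto.
    + intros [|i] [|j] hi hj hij; simpl.
      * lia.
      * apply hkr. apply nth_In. lia.
      * intro e. apply (hkr (nth i l (gone G))). apply nth_In; lia. apply sc_sym; auto.
      * apply hd; lia.
Qed.

Theorem mainTheorem11 (G : Group) (H K : G -> Prop) :
  finitely_generated G ->
  is_subgroup G H -> is_subgroup G K -> (forall x, H x -> K x) ->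
  narrow_coset_space G H ->
  finite_index G K \/ finite_index_in G K H.
Proof.
  intros _ hH hK hHK [S [gen [hunb hnar]]].
  destruct (classic (finite_index G K)) as [f|nf1]; auto.
  destruct (classic (finite_index_in G K H)) as [f|nf2]; auto.
  exfalso.
  destruct (classic (S = [])) as [e|hS].
  { subst S. destruct (hunb 0) as [x [y [_ [_ hd]]]]. apply hd.
    assert (triv : forall g, generated G [] g -> g = gone G).
    { induction 1 as [| ? ? _ _ [] | ? ? _ _ []]. reflexivity. }
    rewrite (triv x (gen x)), (triv y (gen y)). exists 0. split; auto. apply walk_nil. apply sc_refl; auto. }
  destruct (hnar 1 (le_n 1)) as [L hL].
  destruct (klist G H K hH nf2 (Datatypes.S L)) as [l [hl [hlK hld]]].
  assert (hk : forall i, i <= L -> K (nth i l (gone G))).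
  { intros i hi. apply hlK. apply nth_In. lia. }
  destruct (hL (fun i => Zset G S H K (nth i l (gone G)))) as [i [j [hi [hj [hij [x [hx1 hx2]]]]]]].
  { intros i hi. split. apply Z_vertex; auto. split.
    apply Z_unb; auto. apply Z_conn; auto. }
  apply (hld i j); try lia. eapply Z_disj; eauto.
Qed.
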